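(* Let $G$ be a finitely generated group hyperbolic relative to a finite collection $\mathcal P$, $S$ a finite generating set, $(\epsilon,R,D)$ thin-triangle constants, and $U\subset V\cup W$ a finite subset with $|U|\ge 2$. Then for every positive integer $r$, the $r$-hull $U_r$ is finite.
   Context: $\Gamma$ is the Cayley graph of $G$ w.r.t. $S$, $V=G$, $W$ the set of cosets $gP_\lambda$; relative hyperbolicity means the coned-off Cayley graph (vertex set $V\cup W$, edges of $\Gamma$ plus edges $(v,w)$ for $v\in w$) is fine (for each edge $e$ and integer $m$, finitely many circuits of length $\le m$ contain $e$) and $\delta$-hyperbolic. $|\cdot,\cdot|_S$ is extended to $V\cup W$ via distances in $\Gamma$ between corresponding elements/cosets. For a geodesic edge-path $p=(p_j)_{j=0}^\ell$ in $\Gamma$, $p_i$ is $(\epsilon,R)$-deep in $w\in W$ if $R\le i\le\ell-R$ and $|p_j,w|_S\le\epsilon$ for all $|j-i|\le R$. A geodesic from $a$ to $b$ ($a,b\in V\cup W$) is a geodesic of length $|a,b|_S$ starting at $a$ (if $a\in V$) or in $a$ (if $a\in W$), ending analogously at $b$; for $i>\ell$, $p_i:=p_\ell$. Positive integers $(\epsilon,R,D)$ are thin-triangle constants if: $D\ge\epsilon$; no vertex of a geodesic in $\Gamma$ is $(\epsilon,R)$-deep in two distinct cosets; and for all $a,b,c\in V\cup W$ with $a\ne b$, geodesics $p^{ab},p^{bc},p^{ac}$, $\ell=|a,b|_S$, $0\le i\le\ell$, with $z=w$ if $p^{ab}_i$ is $(\epsilon,R)$-deep in $w$ and $z=p^{ab}_i$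 otherwise, we have $|z,p^{ac}_i|_S\le D$ or $|z,p^{bc}_{\ell-i}|_S\le D$. The $r$-hull $U_r$ of finite $U$ is the union of all $v\in V$ with $|v,u|_S\le r$ for every $u\in U$, and all $w\in W$ with $|w,u|_S\le r+\epsilon$ for every $u\in U$. *)

(* Defs.v *)
From Stdlib Require Import Arith List Lia.
Import ListNotations.

Record group := Group {
  carrier :> Type;
  gmul : carrier -> carrier -> carrier;
  gone : carrier;
  ginv : carrier -> carrier;
  gmul_assoc : forall x y z, gmul x (gmul y z) = gmul (gmul x y) z;
  gmul_1l : forall x, gmul gone x = x;
  gmul_1r : forall x, gmul x gone = x;
  gmul_Vl : forall x, gmul (ginv x) x = gone;
  gmul_Vr : forall x, gmul x (ginv x) = gone }.

Section RelHyp.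
Variable G : group.

Fixpoint word_eval (w : list G) : G :=
  match w with [] => gone G | x :: w' => gmul G x (word_eval w') end.

Definition generates (S : list G) : Prop :=
  forall g : G, exists w : list G,
    Forall (fun x => In x S \/ In (ginv G x) S) w /\ word_eval w = g.

Definition is_subgroup (H : G -> Prop) : Prop :=
  H (gone G) /\ (forall x y, H x -> H y -> H (gmul G x y)) /\
  (forall x, H x -> H (ginv G x)).

Variable Sg : list G.
Variable Lam : Type.          (* index set of the peripheral subgroups *)
Variable P : Lam -> G -> Prop.

Definition adjS (x y : G) : Prop :=
  exists s, In s Sg /\ (y = gmul G x s \/ x = gmul G y s).

Definition is_path (p : nat -> G) (n : nat) : Prop :=
  forall i, i < n -> adjS (p i) (p (S i)).

Definition dist_le (x y : G) (n : nat) : Prop :=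
  exists (p : nat -> G) (m : nat), m <= n /\ p 0 = x /\ p m = y /\ is_path p m.

(* VV g = the element g in V; WW l g = the coset g P_l in W
   (W is the disjoint union over l of the left cosets of P_l). *)
Inductive vtx := VV (g : G) | WW (l : Lam) (g : G).

Definition mem_coset (l : Lam) (g x : G) : Prop :=
  exists h, P l h /\ x = gmul G g h.

Definition elems (a : vtx) : G -> Prop :=
  match a with VV g => fun x => x = g | WW l g => mem_coset l g end.

(* equality in V \cup W (cosets are equal as sets) *)
Definition same_vtx (a b : vtx) : Prop :=
  match a, b with
  | VV g, VV h => g = h
  | WW l g, WW l' g' => l = l' /\ forall x, mem_coset l g x <-> mem_coset l' g' x
  | _, _ => False
  end.

Definition distS_le (a b : vtx) (n : nat) : Prop :=
  exists x y, elems a x /\ elems b y /\ dist_le x y n.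

(* p (with p_i := p_l for i > l) is a geodesic from a to b of length l *)
Definition geod (a b : vtx) (p : nat -> G) (l : nat) : Prop :=
  elems a (p 0) /\ elems b (p l) /\ is_path p l /\
  (forall i, l <= i -> p i = p l) /\
  distS_le a b l /\ (forall m, distS_le a b m -> l <= m).

Definition geodGamma (p : nat -> G) (l : nat) : Prop :=
  geod (VV (p 0)) (VV (p l)) p l.

Definition deep (eps R : nat) (p : nat -> G) (l i : nat) (w : vtx) : Prop :=
  R <= i /\ i + R <= l /\
  forall j, i - R <= j -> j <= i + R -> distS_le (VV (p j)) w eps.

Definition thin_triangle_constants (eps R D : nat) : Prop :=
  0 < eps /\ 0 < R /\ 0 < D /\ eps <= D /\
  (forall p l i l1 g1 l2 g2, geodGamma p l ->
     deep eps R p l i (WW l1 g1) -> deep eps R p l i (WW l2 g2) ->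
     same_vtx (WW l1 g1) (WW l2 g2)) /\
  (forall (a b c : vtx) pab lab pbc lbc pac lac,
     ~ same_vtx a b ->
     geod a b pab lab -> geod b c pbc lbc -> geod a c pac lac ->
     forall i, i <= lab ->
     let near z := distS_le z (VV (pac i)) D \/
                   distS_le z (VV (pbc (lab - i))) D in
     (forall l g, deep eps R pab lab i (WW l g) -> near (WW l g)) /\
     ((forall l g, ~ deep eps R pab lab i (WW l g)) -> near (VV (pab i)))).

Definition in_hull (eps r : nat) (U : list vtx) (x : vtx) : Prop :=
  match x with
  | VV _ => forall u, In u U -> distS_le x u r
  | WW _ _ => forall u, In u U -> distS_le x u (r + eps)
  end.

Definition finite_vset (A : vtx -> Prop) : Prop :=
  exists L : list vtx, forall x, A x -> exists y, In y L /\ same_vtx x y.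

Definition adjC (a b : vtx) : Prop :=
  match a, b with
  | VV g, VV h => adjS g h
  | VV v, WW l g => mem_coset l g v
  | WW l g, VV v => mem_coset l g v
  | WW _ _, WW _ _ => False
  end.

Definition is_pathC (q : nat -> vtx) (n : nat) : Prop :=
  forall i, i < n -> adjC (q i) (q (S i)).

Definition distC_le (a b : vtx) (n : nat) : Prop :=
  exists (q : nat -> vtx) (m : nat), m <= n /\ same_vtx (q 0) a /\
    same_vtx (q m) b /\ is_pathC q m.

Definition geodC (a b : vtx) (q : nat -> vtx) (l : nat) : Prop :=
  same_vtx (q 0) a /\ same_vtx (q l) b /\ is_pathC q l /\
  (forall m, distC_le a b m -> l <= m).

Definition hyperbolicC (delta : nat) : Prop :=
  forall x y z qxy lxy qyz lyz qxz lxz,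
    geodC x y qxy lxy -> geodC y z qyz lyz -> geodC x z qxz lxz ->
    forall i, i <= lxy -> exists j,
      (j <= lyz /\ distC_le (qxy i) (qyz j) delta) \/
      (j <= lxz /\ distC_le (qxy i) (qxz j) delta).

(* circuits = simple cycles, as cyclic lists of vertices *)
Definition circuit (c : list vtx) : Prop :=
  3 <= length c /\
  (forall i d, i < length c ->
     adjC (nth i c d) (nth (S i mod length c) c d)) /\
  (forall i j d, i < length c -> j < length c -> i <> j ->
     ~ same_vtx (nth i c d) (nth j c d)).

Definition contains_edge (c : list vtx) (a b : vtx) : Prop :=
  exists i d, i < length c /\
    ((same_vtx (nth i c d) a /\ same_vtx (nth (S i mod length c) c d) b) \/
     (same_vtx (nth i c d) b /\ same_vtx (nth (S i mod length c) c d) a)).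

Definition fineC : Prop :=
  forall a b, adjC a b -> forall m, exists L : list (list vtx),
    forall c, circuit c -> length c <= m -> contains_edge c a b ->
      exists c', In c' L /\ Forall2 same_vtx c c'.

Definition rel_hyperbolic : Prop :=
  fineC /\ exists delta, hyperbolicC delta.

End RelHyp.

(* Main.v *)
Require Import Defs.
From Stdlib Require Import Arith List.
From Stdlib Require Import Arith List Lia Classical.
Import ListNotations.

Fixpoint chain {A} (R : A -> A -> Prop) (l : list A) : Prop :=
  match l with
  | x :: t => match t with y :: _ => R x y /\ chain R t | [] => True end
  | [] => True
  end.

Lemma last_indep {A} (a : A) t d d' : last (a :: t) d = last (a :: t) d'.
Proof. revert a; induction t as [|b t IH]; intros a; [reflexivity|].
  transitivity (last (b :: t) d); [reflexivity|]. rewrite IH. reflexivity. Qed.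

Lemma last_app_cons {A} (l : list A) a t d : last (l ++ a :: t) d = last (a :: t) d.
Proof. induction l as [|b l IH]; [reflexivity|].
  transitivity (last (l ++ a :: t) d); [|exact IH].
  destruct l; reflexivity. Qed.

Lemma chain_app {A} (R : A -> A -> Prop) l1 x l2 :
  chain R (l1 ++ x :: l2) <-> chain R (l1 ++ [x]) /\ chain R (x :: l2).
Proof. induction l1 as [|a l1 IH]; simpl.
  - destruct l2; simpl; tauto.
  - destruct l1 as [|b l1]; simpl in *.
    + destruct l2; simpl; tauto.
    + rewrite IH. tauto. Qed.

Lemma chain_app2 {A} (R : A -> A -> Prop) l1 l2 d :
  l1 <> [] -> l2 <> [] -> chain R l1 -> chain R l2 -> R (last l1 d) (hd d l2) ->
  chain R (l1 ++ l2).
Proof. intros H1 H2 C1 C2 Hr. destruct l2 as [|y t]; [congruence|].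
  destruct (exists_last H1) as [l [x E]]. subst l1.
  rewrite last_last in Hr. simpl in Hr.
  rewrite <- app_assoc. simpl. apply chain_app. split; auto.
  simpl. split; auto. Qed.

Lemma chain_nth {A} (R : A -> A -> Prop) l i d :
  chain R l -> S i < length l -> R (nth i l d) (nth (S i) l d).
Proof. revert i; induction l as [|a l IH]; intros i C H; simpl in *; [lia|].
  destruct l as [|b l]; simpl in *; [lia|]. destruct C as [C1 C2].
  destruct i; auto. apply (IH i C2). simpl; lia. Qed.

Lemma chain_map {A B} (R : A -> A -> Prop) (R' : B -> B -> Prop) (f : A -> B) l :
  (forall x y, R x y -> R' (f x) (f y)) -> chain R l -> chain R' (map f l).
Proof. intros Hf; induction l as [|a l IH]; simpl; auto.
  destruct l as [|b l]; [simpl; auto|]. intros [H1 H2]; split; [auto|apply (IH H2)]. Qed.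

Lemma chain_rev {A} (R : A -> A -> Prop) l :
  (forall x y, R x y -> R y x) -> chain R l -> chain R (rev l).
Proof. intros Hs; induction l as [|a l IH]; simpl; auto.
  destruct l as [|b l]; simpl; auto. intros [H1 H2].
  specialize (IH H2). simpl in IH. rewrite <- app_assoc. simpl.
  apply chain_app. split; auto. simpl. auto. Qed.

Definition wk {A} (R : A -> A -> Prop) (L : list A) (x y : A) : Prop :=
  chain R L /\ hd_error L = Some x /\ last L x = y.

Lemma wk_rev {A} (R : A -> A -> Prop) L x y :
  (forall x y, R x y -> R y x) -> wk R L x y -> wk R (rev L) y x.
Proof. intros Hs [C [H1 H2]]. destruct L as [|a t]; [discriminate|].
  simpl in H1. injection H1 as ->. split; [apply chain_rev; auto|].
  split.
  - assert (Hne : x :: t <> []) by discriminate.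
    destruct (exists_last Hne) as [l [z E]]. rewrite E in H2 |- *.
    rewrite last_last in H2. subst z. rewrite rev_app_distr. reflexivity.
  - simpl. apply last_last. Qed.

Lemma wk_cat {A} (R : A -> A -> Prop) L1 T x y z :
  wk R L1 x y -> wk R (y :: T) y z -> wk R (L1 ++ T) x z.
Proof. intros [C1 [H1 E1]] [C2 [_ E2]]. destruct L1 as [|a t]; [discriminate|].
  simpl in H1. injection H1 as ->.
  assert (Hne : x :: t <> []) by discriminate.
  destruct (exists_last Hne) as [l [w E]]. rewrite E in *.
  rewrite last_last in E1. subst w. rewrite <- app_assoc. simpl.
  split; [apply chain_app; auto|]. split.
  - destruct l; simpl in *; [injection E as ->|injection E as -> _]; auto.
  - rewrite last_app_cons. rewrite (last_indep _ _ _ y). auto. Qed.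

Lemma not_NoDup_split {A} (l : list A) : ~ NoDup l ->
  exists a l1 l2 l3, l = l1 ++ a :: l2 ++ a :: l3.
Proof. induction l as [|a l IH]; intros H.
  - exfalso; apply H; constructor.
  - destruct (classic (In a l)) as [Hi|Hi].
    + destruct (in_split _ _ Hi) as [l2 [l3 E]]. exists a, [], l2, l3. simpl; congruence.
    + assert (~ NoDup l) by (intro; apply H; constructor; auto).
      destruct (IH H0) as [b [l1 [l2 [l3 E]]]]. exists b, (a :: l1), l2, l3. simpl; congruence.
Qed.

Lemma wk_shorten {A} (R : A -> A -> Prop) : forall n L x y, length L <= n -> wk R L x y ->
  exists L', wk R L' x y /\ NoDup L' /\ length L' <= length L /\ incl L' L.
Proof. induction n as [|n IH]; intros L x y Hl W.
  - destruct L; [destruct W as [_ [H _]]; discriminate|simpl in Hl; lia].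
  - destruct (classic (NoDup L)) as [Hd|Hd].
    + exists L; split; [exact W|]; split; [exact Hd|]; split; [lia|apply incl_refl].
    + destruct (not_NoDup_split _ Hd) as [a [l1 [l2 [l3 E]]]]. subst L.
      destruct W as [C [H1 H2]].
      assert (W' : wk R (l1 ++ a :: l3) x y).
      { split; [|split].
        - apply chain_app in C. destruct C as [C1 C2].
          change (a :: l2 ++ a :: l3) with ((a :: l2) ++ a :: l3) in C2.
          apply chain_app in C2. apply chain_app; tauto.
        - destruct l1; simpl in *; auto.
        - rewrite last_app_cons. rewrite last_app_cons in H2.
          change (a :: l2 ++ a :: l3) with ((a :: l2) ++ a :: l3) in H2.
          rewrite last_app_cons in H2. auto. }
      assert (Hlen : length (l1 ++ a :: l3) < length (l1 ++ a :: l2 ++ a :: l3)).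
      { rewrite !length_app; simpl; rewrite length_app; simpl; lia. }
      destruct (IH (l1 ++ a :: l3) x y ltac:(lia) W') as [L' [W'' [D [Hl' Hi]]]].
      exists L'; split; [exact W''|]; split; [exact D|]; split; [lia|].
      intros z Hz. apply Hi in Hz. apply in_app_or in Hz. apply in_or_app.
      destruct Hz as [Hz|[Hz|Hz]]; [left; exact Hz|right; left; exact Hz|].
      right; right; apply in_or_app; right; right; exact Hz.
Qed.

Lemma wk_suffix {A} (R : A -> A -> Prop) L x y z : wk R L x y -> In z L ->
  exists L2, wk R L2 z y /\ length L2 <= length L /\ incl L2 L.
Proof. intros [C [H1 H2]] Hz. destruct (in_split _ _ Hz) as [l1 [l2 E]]. subst L.
  exists (z :: l2). apply chain_app in C. split; [split; [tauto|split]|].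
  - reflexivity.
  - rewrite last_app_cons in H2. rewrite (last_indep _ _ _ x); auto.
  - split; [rewrite length_app; simpl; lia|]. intros w Hw; apply in_or_app; auto. Qed.

Lemma wk_prefix {A} (R : A -> A -> Prop) L x y z : wk R L x y -> In z L ->
  exists L1, wk R L1 x z /\ length L1 <= length L /\ incl L1 L.
Proof. intros [C [H1 H2]] Hz. destruct (in_split _ _ Hz) as [l1 [l2 E]]. subst L.
  exists (l1 ++ [z]). apply chain_app in C. split; [split; [tauto|split]|].
  - destruct l1; simpl in *; auto.
  - apply last_last.
  - split; [rewrite !length_app; simpl; lia|]. intros w Hw; apply in_app_or in Hw; apply in_or_app.
    destruct Hw as [Hw|[Hw|[]]]; subst; simpl; auto. Qed.

Lemma nth_last' {A} (l : list A) d : l <> [] -> nth (length l - 1) l d = last l d.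
Proof. intros H. destruct (exists_last H) as [l' [a E]]. subst.
  rewrite last_last, length_app. simpl. replace (length l' + 1 - 1) with (length l') by lia.
  rewrite app_nth2 by lia. rewrite Nat.sub_diag. reflexivity. Qed.
Section Main.
Variables (G : group) (Sg : list G) (Lam : Type) (P : Lam -> G -> Prop).
Notation vt := (vtx G Lam).
Notation V := (VV G Lam).
Notation W := (WW G Lam).
Notation same := (same_vtx G Lam P).
Notation adjC' := (adjC G Sg Lam P).
Notation adjS' := (adjS G Sg).
Notation mul := (gmul G).
Notation inv := (ginv G).

Lemma same_refl x : same x x.
Proof. destruct x; simpl; auto. split; [auto|tauto]. Qed.

Lemma same_sym x y : same x y -> same y x.
Proof. destruct x, y; simpl; auto. intros [-> H]; split; [auto|]. intro z; rewrite H; tauto. Qed.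

Lemma same_V g z : same (V g) z -> z = V g.
Proof. destruct z; simpl; intros H; [congruence|contradiction]. Qed.

Fixpoint PW (l : list vt) : Prop :=
  match l with [] => True | x :: t => (forall y, In y t -> ~ same x y) /\ PW t end.

Lemma PW_app l1 l2 : PW l1 -> PW l2 -> (forall x y, In x l1 -> In y l2 -> ~ same x y) ->
  PW (l1 ++ l2).
Proof. induction l1 as [|a l IH]; simpl; auto. intros [H1 H2] H3 H4. split.
  - intros y Hy. apply in_app_or in Hy. destruct Hy; auto.
  - apply IH; auto. Qed.

Lemma PW_nth l : PW l -> forall i j d, i < length l -> j < length l -> i <> j ->
  ~ same (nth i l d) (nth j l d).
Proof. induction l as [|a l IH]; simpl; intros Hp i j d Hi Hj Hij; [lia|].
  destruct Hp as [H1 H2].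
  destruct i as [|i], j as [|j]; [lia| | |].
  - apply H1. apply nth_In. lia.
  - intro Hs. apply same_sym in Hs. revert Hs. apply H1. apply nth_In. lia.
  - apply IH; auto; lia. Qed.

Lemma mk_circuit u t : 2 <= length t -> chain adjC' (u :: t) ->
  adjC' (last (u :: t) u) u -> PW (u :: t) -> circuit G Sg Lam P (u :: t).
Proof. intros Hl C Hw Hp. split; [simpl; lia|split].
  - intros i d Hi. destruct (Nat.eq_dec (S i) (length (u :: t))) as [e|e].
    + rewrite e, Nat.Div0.mod_same by (simpl; lia).
      replace i with (length (u :: t) - 1) by lia.
      rewrite nth_last' by discriminate. rewrite (last_indep _ _ _ u). exact Hw.
    + rewrite Nat.mod_small by lia. apply chain_nth; auto. lia.
  - intros i j d Hi Hj Hij. apply PW_nth; auto. Qed.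

Lemma contains_last u t : t <> [] ->
  contains_edge G Lam P (u :: t) u (last (u :: t) u).
Proof. intros Ht. exists (length (u :: t) - 1), u. split; [simpl; lia|]. right.
  rewrite nth_last' by discriminate. split; [apply same_refl|].
  replace (S (length (u :: t) - 1)) with (length (u :: t)) by (simpl; lia).
  rewrite Nat.Div0.mod_same by (simpl; lia). apply same_refl. Qed.

Lemma Forall2_same c c' z : Forall2 same c c' -> In z c -> exists z', In z' c' /\ same z z'.
Proof. induction 1 as [|a b l l' Hab H IH]; simpl; [tauto|].
  intros [<-|Hz]; [exists b; auto|]. destruct (IH Hz) as [z' [H1 H2]]; eauto. Qed.

Definition isW (u : vt) : Prop := match u with WW _ _ _ _ => True | _ => False end.

Definition seg (u : vt) (Pi : list G) : list vt := u :: map V Pi.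

Lemma last_map' {A B} (f : A -> B) l d : last (map f l) (f d) = f (last l d).
Proof. induction l as [|a l IH]; [reflexivity|]. destruct l as [|b l]; [reflexivity|].
  transitivity (last (map f (b :: l)) (f d)); [reflexivity|]. rewrite IH. reflexivity. Qed.

Lemma seg_chain u Pi x : chain adjS' Pi -> hd_error Pi = Some x -> adjC' u (V x) ->
  chain adjC' (seg u Pi).
Proof. intros C H Hu. destruct Pi as [|a t]; [discriminate|]. injection H as ->.
  unfold seg. change (chain adjC' (u :: V x :: map V t)). split; [exact Hu|].
  change (chain adjC' (map V (x :: t))). apply (chain_map adjS'); auto. Qed.

Lemma seg_last u Pi x y d : hd_error Pi = Some x -> last Pi x = y -> last (seg u Pi) d = V y.
Proof. intros H E. destruct Pi as [|a t]; [discriminate|]. injection H as ->.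
  unfold seg. change (last (u :: map V (x :: t)) d) with (last (map V (x :: t)) d).
  change (map V (x :: t)) with (V x :: map V t).
  rewrite (last_indep _ _ _ (V x)). change (V x :: map V t) with (map V (x :: t)).
  rewrite last_map'. congruence. Qed.

Lemma app_seg_last l u Pi x y d : hd_error Pi = Some x -> last Pi x = y ->
  last (l ++ seg u Pi) d = V y.
Proof. intros H E. unfold seg at 1. rewrite last_app_cons.
  exact (seg_last u Pi x y d H E). Qed.

Lemma PW_map l : NoDup l -> PW (map V l).
Proof. induction 1 as [|a l Ha Hd IH]; simpl; auto. split; auto.
  intros y Hy Hs. apply in_map_iff in Hy. destruct Hy as [b [<- Hb]].
  simpl in Hs. subst. contradiction. Qed.

Lemma seg_PW u Pi : isW u -> NoDup Pi -> PW (seg u Pi).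
Proof. intros Hu Hd. simpl. split; [|apply PW_map; auto].
  intros y Hy. apply in_map_iff in Hy. destruct Hy as [b [<- _]].
  destruct u; simpl; auto. Qed.

Lemma seg_cross u Pi u' Pi' : isW u -> isW u' -> ~ same u u' ->
  (forall z, In z Pi -> In z Pi' -> False) ->
  forall x y, In x (seg u Pi) -> In y (seg u' Pi') -> ~ same x y.
Proof. intros Hu Hu' Huu Hd x y Hx Hy. destruct Hx as [<-|Hx]; destruct Hy as [<-|Hy].
  - auto.
  - apply in_map_iff in Hy. destruct Hy as [b [<- _]]. destruct u; simpl; auto.
  - apply in_map_iff in Hx. destruct Hx as [b [<- _]]. destruct u'; simpl; auto.
  - apply in_map_iff in Hx. destruct Hx as [b [<- Hb]].
    apply in_map_iff in Hy. destruct Hy as [c [<- Hc]]. simpl. intros ->. eauto. Qed.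

Lemma hd_In {A} (L : list A) x : hd_error L = Some x -> In x L.
Proof. destruct L; simpl; intros H; [discriminate|injection H as ->; auto]. Qed.

Lemma adjS_sym x y : adjS' x y -> adjS' y x.
Proof. intros [s [Hs [H|H]]]; exists s; auto. Qed.

Definition nbrs (z : G) : list G :=
  map (mul z) Sg ++ map (fun s => mul z (inv s)) Sg.

Lemma adj_nbr z y : adjS' z y -> In y (nbrs z).
Proof. intros [s [Hs [H|H]]]; apply in_or_app.
  - left. subst. apply in_map; auto.
  - right. apply in_map_iff. exists s. split; auto. subst.
    rewrite <- gmul_assoc, gmul_Vr, gmul_1r. reflexivity. Qed.

Fixpoint ball (n : nat) (c : G) : list G :=
  match n with 0 => [c] | S n => c :: flat_map (ball n) (nbrs c) end.

Lemma ball_chain t : forall n c, chain adjS' (c :: t) -> length t <= n ->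
  In (last (c :: t) c) (ball n c).
Proof. induction t as [|d t IH]; intros n c C Hl.
  - destruct n; simpl; auto.
  - destruct n as [|n]; [simpl in Hl; lia|]. destruct C as [C1 C2].
    change (last (c :: d :: t) c) with (last (d :: t) c).
    rewrite (last_indep _ _ _ d). simpl (ball (S n) c). right.
    apply in_flat_map. exists d. split; [apply adj_nbr; auto|]. apply IH; auto. simpl in Hl; lia.
Qed.

Lemma chain_seq (p : nat -> G) m :
  (forall i, i < m -> adjS' (p i) (p (S i))) -> chain adjS' (map p (seq 0 (S m))).
Proof. revert p; induction m as [|m IH]; intros p H; [simpl; auto|].
  change (map p (seq 0 (S (S m)))) with (p 0 :: map p (seq 1 (S m))).
  rewrite <- seq_shift, map_map.
  specialize (IH (fun i => p (S i)) ltac:(intros i Hi; apply H; lia)).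
  change (map (fun i => p (S i)) (seq 0 (S m))) with (p 1 :: map (fun i => p (S i)) (seq 1 m)) in *.
  split; [apply H; lia|exact IH]. Qed.

Lemma dist_wk x y n : dist_le G Sg x y n -> exists L, wk adjS' L x y /\ length L <= S n.
Proof. intros [p [m [Hm [H0 [Hmy Hp]]]]]. exists (map p (seq 0 (S m))).
  split; [split; [apply chain_seq; auto|split]|].
  - simpl. congruence.
  - rewrite seq_S, map_app. simpl. rewrite last_last. auto.
  - rewrite length_map, length_seq. lia. Qed.

Lemma ball_wk n L c y : wk adjS' L c y -> length L <= S n -> In y (ball n c).
Proof. intros [C [H E]] Hl. destruct L as [|a t]; [discriminate|]. injection H as ->.
  subst y. apply ball_chain; auto. simpl in Hl; lia. Qed.

Definition ballL (X : list G) n : list G := flat_map (ball n) X.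

Lemma ballL_in X n c y L : In c X -> wk adjS' L c y -> length L <= S n -> In y (ballL X n).
Proof. intros Hc W Hl. apply in_flat_map. exists c. split; auto. eapply ball_wk; eauto. Qed.

Lemma coset_same l g p : is_subgroup G (P l) -> mem_coset G Lam P l g p -> same (W l g) (W l p).
Proof. intros [H1 [H2 H3]] [h [Hh ->]]. simpl. split; auto. intros x. split.
  - intros [h' [Hh' ->]]. exists (mul (inv h) h'). split; auto.
    rewrite <- gmul_assoc, (gmul_assoc G h), gmul_Vr, gmul_1l. reflexivity.
  - intros [h' [Hh' ->]]. exists (mul h h'). split; auto. rewrite gmul_assoc. reflexivity. Qed.

Lemma word_walk w : Forall (fun x => In x Sg \/ In (inv x) Sg) w ->
  forall g, exists L, wk adjS' L g (mul g (word_eval G w)).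
Proof. induction 1 as [|x w Hx Hw IH]; intros g.
  - exists [g]. split; [simpl; auto|split; [reflexivity|]]. simpl. rewrite gmul_1r. reflexivity.
  - destruct (IH (mul g x)) as [L [C [H E]]]. exists (g :: L).
    destruct L as [|a t]; [discriminate|]. injection H as ->.
    split; [split; [|exact C]|split; [reflexivity|]].
    + destruct Hx as [Hx|Hx]; [exists x; auto|].
      exists (inv x). split; auto. right. rewrite <- gmul_assoc, gmul_Vr, gmul_1r. reflexivity.
    + change (last (g :: mul g x :: t) g) with (last (mul g x :: t) g).
      rewrite (last_indep _ _ _ (mul g x)), E. simpl. rewrite gmul_assoc. reflexivity. Qed.

Lemma connected : generates G Sg -> forall g h, exists L, wk adjS' L g h.
Proof. intros HS g h. destruct (HS (mul (inv g) h)) as [w [Hw E]].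
  destruct (word_walk w Hw g) as [L HL]. exists L. rewrite E, gmul_assoc, gmul_Vr, gmul_1l in HL.
  exact HL. Qed.

Definition vl (Lv : list vt) : list G :=
  flat_map (fun z => match z with VV _ _ g => [g] | _ => [] end) Lv.

Lemma fine_bound : fineC G Sg Lam P -> forall a x0, adjC' a (V x0) -> forall m,
  exists Lv : list vt, forall c, circuit G Sg Lam P c -> length c <= m ->
  contains_edge G Lam P c a (V x0) -> forall z, In z c -> exists z', In z' Lv /\ same z z'.
Proof. intros Hf a x0 Ha m. destruct (Hf a (V x0) Ha m) as [L HL]. exists (concat L).
  intros c Hc Hl He z Hz. destruct (HL c Hc Hl He) as [c' [Hc' H2]].
  destruct (Forall2_same _ _ _ H2 Hz) as [z' [Hz' Hs]]. exists z'. split; auto.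
  apply in_concat. eauto. Qed.

Lemma fine_bound_V Lv c g : (forall z, In z c -> exists z', In z' Lv /\ same z z') ->
  In (V g) c -> In g (vl Lv).
Proof. intros H Hg. destruct (H _ Hg) as [z' [Hz Hs]]. apply same_V in Hs. subst.
  apply in_flat_map. exists (V g). simpl; auto. Qed.


Lemma VL (Hf : fineC G Sg Lam P) la ga lb gb Sig
  (Hab : ~ same (W la ga) (W lb gb)) (HSig : wk adjS' Sig gb ga) (HSd : NoDup Sig)
  (Hga : mem_coset G Lam P la ga ga) (Hgb : mem_coset G Lam P lb gb gb) :
  forall k, exists Vk : list G, forall v x y Lx Ly,
    mem_coset G Lam P la ga x -> mem_coset G Lam P lb gb y ->
    wk adjS' Lx v x -> length Lx <= S k -> wk adjS' Ly v y -> length Ly <= S k -> In v Vk.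
Proof. intros k.
  destruct (fine_bound Hf (W la ga) ga Hga (2 + (2 * k + 1) + length Sig)) as [Lv HLv].
  exists (ballL (ballL Sig (2 * k)) k ++ ballL (vl Lv) k).
  intros v x y Lx Ly Hx Hy Wx Hlx Wy Hly.
  pose proof (wk_rev _ _ _ _ adjS_sym Wx) as Wx'.
  destruct Ly as [|v' T] eqn:ELy; [destruct Wy as [_ [H _]]; discriminate|].
  assert (v' = v) by (destruct Wy as [_ [H _]]; simpl in H; congruence). subst v'.
  pose proof (wk_cat _ _ _ _ _ _ Wx' Wy) as Wxy.
  destruct (wk_shorten _ _ _ _ _ (le_n _) Wxy) as [Pi [WPi [DPi [HlPi _]]]].
  rewrite length_app, length_rev in HlPi. simpl in Hly.
  assert (Hv : forall X, In x X -> In v (ballL X k)).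
  { intros X HX. eapply ballL_in; eauto. rewrite length_rev; lia. }
  apply in_or_app.
  destruct (classic (exists z, In z Pi /\ In z Sig)) as [[z [Hz1 Hz2]]|Hno].
  - left. apply Hv. destruct (wk_prefix _ _ _ _ _ WPi Hz1) as [L1 [W1 [Hl1 _]]].
    apply (ballL_in _ _ z x (rev L1)); [exact Hz2| apply wk_rev; [apply adjS_sym|exact W1] | rewrite length_rev; lia].
  - right. apply Hv.
    destruct WPi as [CPi [HPi EPi]]. destruct HSig as [CS [HS ES]].
    set (c := seg (W la ga) Pi ++ seg (W lb gb) Sig).
    assert (Hc : circuit G Sg Lam P c).
    { unfold c. simpl. apply mk_circuit.
      - destruct Pi; [discriminate|]. rewrite length_app. simpl. lia.
      - change (chain adjC' (seg (W la ga) Pi ++ seg (W lb gb) Sig)).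
        apply (chain_app2 _ _ _ (W la ga)); try discriminate.
        + eapply seg_chain; eauto.
        + eapply seg_chain; [exact CS|exact HS|exact Hgb].
        + rewrite (seg_last _ _ x y); simpl; auto.
      - change (adjC' (last (seg (W la ga) Pi ++ seg (W lb gb) Sig) (W la ga)) (W la ga)).
        rewrite (app_seg_last _ _ _ gb ga); auto. 
      - change (PW (seg (W la ga) Pi ++ seg (W lb gb) Sig)).
        apply PW_app; try apply seg_PW; simpl; auto.
        apply seg_cross; simpl; auto. intros z Hz1 Hz2; apply Hno; eauto. }
    assert (Hlen : length c <= 2 + (2 * k + 1) + length Sig).
    { unfold c, seg. rewrite length_app. simpl. rewrite !length_map. lia. }
    assert (He : contains_edge G Lam P c (W la ga) (V ga)).
    { assert (Hl : last c (W la ga) = V ga).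
      { unfold c. apply (app_seg_last _ _ _ gb ga); auto. }
      rewrite <- Hl. unfold c. simpl. apply contains_last. destruct Pi; discriminate. }
    apply (fine_bound_V Lv c). apply HLv; auto.
    unfold c. apply in_or_app. left. right. apply in_map. apply hd_In; auto.
Qed.

Lemma CL (Hf : fineC G Sg Lam P) (enumLam : list Lam) (HLam : forall l, In l enumLam)
  (HP : forall l, is_subgroup G (P l)) la ga lb gb Sig
  (Hab : ~ same (W la ga) (W lb gb)) (HSig : wk adjS' Sig gb ga) (HSd : NoDup Sig)
  (Hga : mem_coset G Lam P la ga ga) (Hgb : mem_coset G Lam P lb gb gb) :
  forall k, exists Wk : list vt, forall l g p x q y Lp Lq,
    mem_coset G Lam P l g p -> mem_coset G Lam P la ga x ->
    wk adjS' Lp p x -> length Lp <= S k ->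
    mem_coset G Lam P l g q -> mem_coset G Lam P lb gb y ->
    wk adjS' Lq q y -> length Lq <= S k ->
    exists w', In w' Wk /\ same (W l g) w'.
Proof. intros k.
  destruct (VL Hf la ga lb gb Sig Hab HSig HSd Hga Hgb k) as [Vk HVk].
  destruct (fine_bound Hf (W la ga) ga Hga (3 + 2 * (S k) + length Sig)) as [Lv HLv].
  set (PL := ballL Sig k ++ ballL Vk k).
  exists (W la ga :: W lb gb :: Lv ++ flat_map (fun l => map (fun p => W l p) PL) enumLam).
  intros l g p x q y Lp Lq Hp Hx Wp Hlp Hq Hy Wq Hlq.
  assert (Hfin : forall p', In p' PL -> mem_coset G Lam P l g p' ->
     exists w', In w' (W la ga :: W lb gb :: Lv ++ flat_map (fun l => map (fun p => W l p) PL) enumLam)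
       /\ same (W l g) w').
  { intros p' H1 H2. exists (W l p'). split; [|apply coset_same; auto].
    right; right. apply in_or_app; right. apply in_flat_map. exists l. split; auto.
    apply in_map; auto. }
  destruct (classic (same (W l g) (W la ga))) as [Ha|Ha]; [exists (W la ga); simpl; auto|].
  destruct (classic (same (W l g) (W lb gb))) as [Hb|Hb]; [exists (W lb gb); simpl; auto|].
  pose proof (wk_rev _ _ _ _ adjS_sym Wp) as Wp'.
  destruct (wk_shorten _ _ _ _ _ (le_n _) Wp') as [P1 [W1 [D1 [Hl1 _]]]].
  destruct (wk_shorten _ _ _ _ _ (le_n _) Wq) as [P2 [W2 [D2 [Hl2 _]]]].
  rewrite length_rev in Hl1.
  destruct (classic (exists z, In z P1 /\ In z Sig)) as [[z [Hz1 Hz2]]|No1].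
  { apply (Hfin p); auto. apply in_or_app; left.
    destruct (wk_suffix _ _ _ _ _ W1 Hz1) as [L2 [W3 [Hl3 _]]].
    apply (ballL_in _ _ z _ L2); auto. lia. }
  destruct (classic (exists z, In z P2 /\ In z Sig)) as [[z [Hz1 Hz2]]|No2].
  { apply (Hfin q); auto. apply in_or_app; left.
    destruct (wk_prefix _ _ _ _ _ W2 Hz1) as [L2 [W3 [Hl3 _]]].
    apply (ballL_in _ _ z _ (rev L2)); [auto|apply wk_rev; [apply adjS_sym|auto]|].
    rewrite length_rev; lia. }
  destruct (classic (exists z, In z P1 /\ In z P2)) as [[z [Hz1 Hz2]]|No3].
  { apply (Hfin p); auto. apply in_or_app; right.
    destruct (wk_prefix _ _ _ _ _ W1 Hz1) as [L1 [W3 [Hl3 _]]].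
    destruct (wk_suffix _ _ _ _ _ W2 Hz2) as [L2 [W4 [Hl4 _]]].
    assert (Hz : In z Vk).
    { apply (HVk z x y (rev L1) L2); auto; [apply wk_rev; [apply adjS_sym|auto]|rewrite length_rev|]; lia. }
    destruct (wk_suffix _ _ _ _ _ W1 Hz1) as [L5 [W5 [Hl5 _]]].
    apply (ballL_in _ _ z _ L5); auto. lia. }
  destruct W1 as [C1 [H1 E1]]. destruct W2 as [C2 [H2 E2]]. destruct HSig as [CS [HS ES]].
  set (c := seg (W la ga) P1 ++ seg (W l g) P2 ++ seg (W lb gb) Sig).
  assert (Hne1 : P1 <> []) by (destruct P1; discriminate).
  assert (Hne2 : P2 <> []) by (destruct P2; discriminate).
  assert (Hc : circuit G Sg Lam P c).
  { unfold c. simpl. apply mk_circuit.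
    - destruct P1; [discriminate|]. rewrite length_app. simpl. lia.
    - change (chain adjC' (seg (W la ga) P1 ++ (seg (W l g) P2 ++ seg (W lb gb) Sig))).
      apply (chain_app2 _ _ _ (W la ga)); try discriminate.
      + eapply seg_chain; eauto.
      + apply (chain_app2 _ _ _ (W la ga)); try discriminate.
        * eapply seg_chain; eauto.
        * eapply seg_chain; [exact CS|exact HS|exact Hgb].
        * rewrite (seg_last _ _ q y); simpl; auto.
      + rewrite (seg_last _ _ x p); simpl; auto.
    - change (adjC' (last (seg (W la ga) P1 ++ (seg (W l g) P2 ++ seg (W lb gb) Sig)) (W la ga)) (W la ga)).
      rewrite app_assoc.
      rewrite (app_seg_last _ _ _ gb ga); auto.
    - change (PW (seg (W la ga) P1 ++ (seg (W l g) P2 ++ seg (W lb gb) Sig))).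
      apply PW_app; [apply seg_PW; simpl; auto| |].
      + apply PW_app; try apply seg_PW; simpl; auto.
        apply seg_cross; simpl; auto. intros z Hz1 Hz2; apply No2; eauto.
      + intros u v Hu Hv. apply in_app_or in Hv. destruct Hv as [Hv|Hv].
        * apply (seg_cross (W la ga) P1 (W l g) P2 I I); auto.
          -- intro Hs; apply Ha; apply same_sym; auto.
          -- intros z Hz1 Hz2; apply No3; eauto.
        * apply (seg_cross (W la ga) P1 (W lb gb) Sig I I); auto.
          intros z Hz1 Hz2; apply No1; eauto. }
  assert (Hlen : length c <= 3 + 2 * (S k) + length Sig).
  { unfold c, seg. rewrite !length_app. simpl. rewrite !length_map. lia. }
  assert (He : contains_edge G Lam P c (W la ga) (V ga)).
  { assert (Hl : last c (W la ga) = V ga).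
    { unfold c. rewrite app_assoc. apply (app_seg_last _ _ _ gb ga); auto. }
    rewrite <- Hl. unfold c. simpl. apply contains_last. destruct P1; discriminate. }
  destruct (HLv c Hc Hlen He (W l g)) as [z' [Hz' Hs]].
  { unfold c. apply in_or_app. right. apply in_or_app. left. left. reflexivity. }
  exists z'. split; auto. right; right. apply in_or_app; auto.
Qed.
End Main.

Theorem lemma3p9
  (G : group) (S : list G) (Lam : Type) (enumLam : list Lam)
  (HLam : forall l : Lam, In l enumLam)
  (P : Lam -> G -> Prop) (HP : forall l, is_subgroup G (P l))
  (HS : generates G S)
  (Hrh : rel_hyperbolic G S Lam P)
  (eps R D : nat) (Hthin : thin_triangle_constants G S Lam P eps R D)
  (U : list (vtx G Lam))
  (HU2 : exists a b, In a U /\ In b U /\ ~ same_vtx G Lam P a b) :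
  forall r : nat, 0 < r ->
    finite_vset G Lam P (in_hull G S Lam P eps r U).
Proof.
  intros r Hr. destruct Hrh as [Hf _].
  destruct (classic (exists g0, In (VV G Lam g0) U)) as [[g0 Hg0]|NoV].
  - exists (map (VV G Lam) (ball G S r g0) ++
       flat_map (fun l => map (WW G Lam l) (ball G S (r + eps) g0)) enumLam).
    intros z Hz. destruct z as [v|l g]; simpl in Hz.
    + destruct (Hz _ Hg0) as [x' [y' [e1 [e2 d]]]]. simpl in e1, e2. subst.
      destruct (dist_wk G S _ _ _ d) as [L [WL HL]].
      eexists. split; [|apply same_refl].
      apply in_or_app; left; apply in_map.
      apply (ball_wk G S r (rev L)); [apply wk_rev; [apply adjS_sym|exact WL]|].
      rewrite length_rev; exact HL.
    + destruct (Hz _ Hg0) as [x' [y' [e1 [e2 d]]]]. simpl in e1, e2. subst.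
      destruct (dist_wk G S _ _ _ d) as [L [WL HL]].
      exists (WW G Lam l x'). split; [|apply coset_same; auto].
      apply in_or_app; right. apply in_flat_map. exists l. split; auto. apply in_map.
      apply (ball_wk G S (r + eps) (rev L)); [apply wk_rev; [apply adjS_sym|exact WL]|].
      rewrite length_rev; exact HL.
  - destruct HU2 as [a [b [Ha [Hb Hab]]]].
    destruct a as [ga0|la ga]; [exfalso; eauto|].
    destruct b as [gb0|lb gb]; [exfalso; eauto|].
    assert (Hga : mem_coset G Lam P la ga ga).
    { exists (gone G). split; [apply HP|]. rewrite gmul_1r; reflexivity. }
    assert (Hgb : mem_coset G Lam P lb gb gb).
    { exists (gone G). split; [apply HP|]. rewrite gmul_1r; reflexivity. }
    destruct (connected G S HS gb ga) as [Sig0 W0].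
    destruct (wk_shorten _ _ _ _ _ (le_n _) W0) as [Sig [WS [DS _]]].
    destruct (VL G S Lam P Hf la ga lb gb Sig Hab WS DS Hga Hgb r) as [Vr HVr].
    destruct (CL G S Lam P Hf enumLam HLam HP la ga lb gb Sig Hab WS DS Hga Hgb (r + eps))
      as [Wk HWk].
    exists (map (VV G Lam) Vr ++ Wk).
    intros z Hz. destruct z as [v|l g]; simpl in Hz.
    + destruct (Hz _ Ha) as [x1 [y1 [e1 [e2 d1]]]].
      destruct (Hz _ Hb) as [x2 [y2 [e3 [e4 d2]]]]. simpl in e1, e2, e3, e4. subst.
      destruct (dist_wk G S _ _ _ d1) as [L1 [W1 H1]].
      destruct (dist_wk G S _ _ _ d2) as [L2 [W2 H2]].
      eexists. split; [|apply same_refl].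
      apply in_or_app; left; apply in_map. eapply HVr; eauto.
    + destruct (Hz _ Ha) as [x1 [y1 [e1 [e2 d1]]]].
      destruct (Hz _ Hb) as [x2 [y2 [e3 [e4 d2]]]]. simpl in e1, e2, e3, e4.
      destruct (dist_wk G S _ _ _ d1) as [L1 [W1 H1]].
      destruct (dist_wk G S _ _ _ d2) as [L2 [W2 H2]].
      destruct (HWk l g x1 y1 x2 y2 L1 L2) as [w' [Hw' Hs]]; auto.
      exists w'. split; auto. apply in_or_app; right; auto.
Qed.
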